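(* Let $\phi\ge1$, let $p\in\mathbb{R}_{\ge0}^n$ be arbitrary, and let each weight $w_i$ be chosen uniformly at random from an arbitrary interval $A_i\subseteq[0,1]$ of length $1/\phi$, independently of the other weights. Let $t\ge0$. Then for every $i\in\{1,\ldots,n\}$ and every $\varepsilon\ge0$, $\Pr[\Lambda^i(t)\in(0,\varepsilon]]\le\phi\varepsilon$.
   Context: For $i\in\{1,\ldots,n\}$ and $j\in\{0,1\}$ let $\mathcal{S}^{x_i=j}=\{x\in\{0,1\}^n: x_i=j\}$. Let $x^{\star,i}$ be a solution maximizing $p^{\mathsf T}x$ over $\{x\in\mathcal{S}^{x_i=0}: w^{\mathsf T}x\le t\}$, and let $\hat{x}^i$ be a solution minimizing $w^{\mathsf T}x$ over $\{x\in\mathcal{S}^{x_i=1}: p^{\mathsf T}x>p^{\mathsf T}x^{\star,i}\}$, with $\hat{x}^i=\perp$ if this set is empty. Define $\Lambda^i(t)=w^{\mathsf T}\hat{x}^i-t$ if $\hat{x}^i\ne\perp$ and $\Lambda^i(t)=\infty$ otherwise. *)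

(* Defs.v *)
From HB Require Import structures.
From mathcomp Require Import all_boot all_order all_algebra.
From mathcomp Require Import all_classical all_reals all_analysis.
Set Implicit Arguments. Unset Strict Implicit. Unset Printing Implicit Defensive.
Import Order.TTheory GRing.Theory Num.Theory.
Local Open Scope classical_set_scope.
Local Open Scope ring_scope.

Definition bvec (n : nat) := {ffun 'I_n -> bool}.

Definition dot (R : realType) (n : nat) (c : 'I_n -> R) (x : bvec n) : R :=
  \sum_(j < n) c j * (x j)%:R.

(* p^T x^{*,i}: the optimal value of max p^T x over
   { x in S^{x_i=0} : w^T x <= t }.  Since p >= 0 and x = 0 is feasible
   (t >= 0), the identity 0 of the big max does not affect the value. *)
Definition optval (R : realType) (n : nat) (p w : 'I_n -> R) (t : R) (i : 'I_n) : R :=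
  \big[Num.max/0]_(x : bvec n | (~~ x i) && (dot w x <= t)) dot p x.

(* Lambda^i(t) = w^T xhat^i - t, where xhat^i minimizes w^T x over
   { x in S^{x_i=1} : p^T x > p^T x^{*,i} }, and Lambda^i(t) = +oo if that
   set is empty (the empty min over \bar R is +oo, and +oo - t = +oo). *)
Definition Lambda (R : realType) (n : nat) (p w : 'I_n -> R) (t : R) (i : 'I_n)
  : \bar R :=
  ((\big[Order.min/+oo%E]_(x : bvec n | x i && (optval p w t i < dot p x)%R)
      (dot w x)%:E) - t%:E)%E.

Definition mutually_independent d (T : measurableType d) (R : realType)
  (P : probability T R) (n : nat) (X : 'I_n -> {RV P >-> R}) : Prop :=
  forall (S : {set 'I_n}) (B : 'I_n -> set R),
    (forall j, measurable (B j)) ->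
    P (\bigcap_(j in [set j | j \in S]) (X j @^-1` B j)) =
    (\prod_(j in S) P (X j @^-1` B j))%E.

Lemma interval_len_pos (R : realType) (a phi : R) : 1 <= phi -> a < a + phi^-1.
Proof.
move=> h; rewrite ltrDl invr_gt0; exact: (lt_le_trans ltr01 h).
Qed.

(* Main.v *)
Require Import Defs.
From HB Require Import structures.
From mathcomp Require Import all_boot all_order all_algebra.
From mathcomp Require Import all_classical all_reals all_analysis.
From mathcomp Require Import measurable_realfun lra.
Import Order.TTheory GRing.Theory Num.Theory.
Local Open Scope classical_set_scope.
Local Open Scope ring_scope.

Section meas.
Context {d0 : measure_display} {T0 : measurableType d0} {R : realType} {n : nat}
  (v : T0 -> 'I_n -> R) (hv : forall j, measurable_fun setT (fun om => v om j))
  (p : 'I_n -> R) (t : R) (i : 'I_n).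

Lemma m_dot (x : bvec n) : measurable_fun setT (fun om => dot (v om) x).
Proof.
rewrite /dot; apply: measurable_sum => j.
apply: measurable_funM => //; exact: measurable_cst.
Qed.

Lemma m_bigmax (I : Type) (s : seq I) (P : I -> T0 -> bool) (f : I -> T0 -> R) :
  (forall k, measurable_fun setT (P k)) ->
  (forall k, measurable_fun setT (f k)) ->
  measurable_fun setT (fun om => \big[Num.max/0]_(k <- s | P k om) f k om).
Proof.
move=> hP hf; elim: s => [|k s IH].
  under eq_fun do rewrite big_nil; exact: measurable_cst.
under eq_fun do rewrite big_cons.
apply: measurable_fun_if => //.
- apply: measurable_maxr; [exact: measurable_funS (hf k)|exact: measurable_funS IH].
- exact: measurable_funS IH.
Qed.

Lemma m_bigmin (I : Type) (s : seq I) (P : I -> T0 -> bool) (f : I -> T0 -> \bar R) :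
  (forall k, measurable_fun setT (P k)) ->
  (forall k, measurable_fun setT (f k)) ->
  measurable_fun setT (fun om => \big[Order.min/+oo%E]_(k <- s | P k om) f k om).
Proof.
move=> hP hf; elim: s => [|k s IH].
  under eq_fun do rewrite big_nil; exact: measurable_cst.
under eq_fun do rewrite big_cons.
apply: measurable_fun_if => //.
- apply: measurable_mine; [exact: measurable_funS (hf k)|exact: measurable_funS IH].
- exact: measurable_funS IH.
Qed.

Lemma m_optval : measurable_fun setT (fun om => optval p (v om) t i).
Proof.
rewrite /optval; apply: m_bigmax => x; last exact: measurable_cst.
apply: measurable_and; first exact: measurable_cst.
apply: measurable_fun_ler; [exact: m_dot | exact: measurable_cst].
Qed.

Definition Fset om (x : bvec n) := x i && (optval p (v om) t i < dot p x).

Lemma m_Fset x : measurable_fun setT (fun om => Fset om x).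
Proof.
apply: measurable_and; first exact: measurable_cst.
apply: measurable_fun_ltr; [exact: m_optval | exact: measurable_cst].
Qed.

Definition MV om : \bar R :=
  \big[Order.min/+oo%E]_(x : bvec n | Fset om x) (dot (v om) x)%:E.

Lemma m_MV : measurable_fun setT MV.
Proof.
rewrite /MV; apply: m_bigmin => x; first exact: m_Fset.
apply/measurable_EFinP; exact: m_dot.
Qed.

Lemma LambdaE om : Lambda p (v om) t i = (MV om - t%:E)%E.
Proof. by []. Qed.

End meas.

Section indep.
Context {R : realType} {d : measure_display} {T : measurableType d}
  {P : probability T R} {n : nat} (w : 'I_n -> {RV P >-> R})
  (hindep : mutually_independent w) (i : 'I_n).

Definition Gs : set (set T) := [set A | exists B : 'I_n -> set R,
  (forall j, measurable (B j)) /\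
  A = \bigcap_(j in [set j | j \in [set~ i]%SET]) (w j @^-1` B j)].

Lemma Gs_meas : Gs `<=` measurable.
Proof.
move=> _ [B [mB ->]]; apply: fin_bigcap_measurable; first exact: finite_finset.
move=> j _; exact: measurable_funPTI.
Qed.

Lemma Gs_setT : Gs setT.
Proof.
exists (fun=> setT); split => //.
by apply/seteqP; split => // x _ j _.
Qed.

Lemma Gs_setI : setI_closed Gs.
Proof.
move=> _ _ [B [mB ->]] [C [mC ->]].
exists (fun j => B j `&` C j); split; first by move=> j; exact: measurableI.
apply/seteqP; split => x.
  by move=> [hB hC] j hj; split; [exact: hB|exact: hC].
by move=> h; split => j hj; have [] := h j hj.
Qed.

Lemma indep_ext (B : set R) : measurable B ->
  forall A, <<s Gs >> A -> P (A `&` w i @^-1` B) = (P A * P (w i @^-1` B))%E.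
Proof.
move=> mB.
have mWB : measurable (w i @^-1` B) by exact: measurable_funPTI.
have hfin : P (w i @^-1` B) \is a fin_num by exact: fin_num_measure.
have hge0 : 0 <= fine (P (w i @^-1` B)) by apply: fine_ge0; exact: measure_ge0.
pose c : {nonneg R} := NngNum hge0.
have cov : \bigcup_(k : nat) (fun=> @setT T) k = setT.
  by apply/seteqP; split => // x _; exists 0%N.
have key := @g_sigma_algebra_measure_unique _ _ _ Gs Gs_meas (fun=> setT)
  (fun=> Gs_setT) cov (mrestr P mWB) (mscale c P) Gs_setI.
move=> A hA.
suff : mrestr P mWB A = mscale c P A.
  change (P (A `&` w i @^-1` B) = ((fine (P (w i @^-1` B)))%:E * P A)%E ->
    P (A `&` w i @^-1` B) = (P A * P (w i @^-1` B))%E).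
  by rewrite fineK // muleC.
apply: key hA.
- move=> _ [C [mC ->]].
  change (P (\bigcap_(j in [set j | j \in [set~ i]%SET]) (w j @^-1` C j) `&` w i @^-1` B) =
    ((fine (P (w i @^-1` B)))%:E * P (\bigcap_(j in [set j | j \in [set~ i]%SET]) (w j @^-1` C j)))%E).
  rewrite fineK // muleC.
  pose C' j := if j == i then B else C j.
  have mC' j : measurable (C' j) by rewrite /C'; case: ifP.
  have h1 := hindep [set: 'I_n]%SET C' mC'.
  have h2 := hindep [set~ i]%SET C mC.
  have -> : \bigcap_(j in [set j | j \in [set~ i]%SET]) (w j @^-1` C j) `&` w i @^-1` B
      = \bigcap_(j in [set j | j \in [set: 'I_n]%SET]) (w j @^-1` C' j).
    apply/seteqP; split => x.
      move=> [hC hB] j _; rewrite /C'; case: eqP => [->//|/eqP ji].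
      by apply: hC; rewrite /= in_setC1.
    move=> h; split.
      move=> j; rewrite /= in_setC1 => ji.
      have := h j; rewrite /C' (negbTE ji); apply; rewrite /mkset; exact: finset.in_setT.
    have := h i; rewrite /C' eqxx; apply; rewrite /mkset; exact: finset.in_setT.
  rewrite h1 h2 (bigD1 i) ?finset.in_setT //= muleC.
  have -> : C' i = B by rewrite /C' eqxx.
  congr (_ * _)%E.
  apply: eq_big => j; first by rewrite finset.in_setT in_setC1.
  by move=> /andP[_ /negbTE ji]; rewrite /C' ji.
- move=> k; change (P (setT `&` w i @^-1` B) < +oo)%E; rewrite setTI.
  by apply: (le_lt_trans (probability_le1 P mWB)); exact: ltry.
Qed.

End indep.

Lemma unif_le (R : realType) (a phi : R) (hphi : 1 <= phi) (al be : R) :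
  al <= be ->
  (uniform_prob (interval_len_pos a hphi) `]al, be] <= (phi * (be - al))%:E)%E.
Proof.
move=> hab.
have phi0 : 0 < phi := lt_le_trans ltr01 hphi.
rewrite /uniform_prob.
apply: (@le_trans _ _ (\int[lebesgue_measure]_(x in `]al, be]) (cst phi%:E) x)%E).
  apply: ge0_le_integral => //.
  - move=> x _; rewrite lee_fin; apply: uniform_pdf_ge0; exact: interval_len_pos.
  - apply/measurable_EFinP; apply: measurable_funS (measurable_uniform_pdf _ _) => //.
  - move=> x _; rewrite lee_fin /uniform_pdf; case: ifP => _; last exact: ltW.
    by rewrite addrC addKr invrK.
rewrite integral_cst // [X in (_ * X <= _)%E](lebesgue_measure_itv `]al, be]) /= lte_fin.
case: ltP => h.
  by rewrite -EFinD -EFinM.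
rewrite mule0 lee_fin; apply: mulr_ge0; [exact: ltW|by rewrite subr_ge0].
Qed.

Lemma unif_null (R : realType) (a phi : R) (hphi : 1 <= phi) :
  0 <= a -> a + phi^-1 <= 1 ->
  uniform_prob (interval_len_pos a hphi) (~` `[0, 1]) = 0%E.
Proof.
move=> ha0 ha1; rewrite /uniform_prob; apply: integral0_eq => x hx.
rewrite /uniform_pdf; case: ifP => // /andP[h1 h2].
exfalso; apply: hx; rewrite /= in_itv /=; apply/andP; split.
  exact: le_trans h1.
exact: le_trans ha1.
Qed.

Lemma adde_min_fin (R : realType) (c : R) (x y : \bar R) :
  (c%:E + Order.min x y = Order.min (c%:E + x) (c%:E + y))%E.
Proof.
rewrite /Order.min /= lteD2lE //; by case: ifP.
Qed.

Lemma bigmin_addl (R : realType) (I : Type) (r : seq I) (P : pred I) (c : R) (f : I -> R) :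
  \big[Order.min/+oo%E]_(x <- r | P x) (c + f x)%:E =
  (c%:E + \big[Order.min/+oo%E]_(x <- r | P x) (f x)%:E)%E.
Proof.
elim: r => [|a r IH]; first by rewrite !big_nil.
rewrite !big_cons; case: (P a) => //.
by rewrite IH adde_min_fin EFinD.
Qed.

Lemma dot_split {R : realType} {n : nat} (i : 'I_n) (w : 'I_n -> R) (x : bvec n) :
  dot w x = w i * (x i)%:R + dot (fun j => if j == i then 0 else w j) x.
Proof.
rewrite /dot (bigD1 i) //= [X in _ = _ + X](bigD1 i) //= eqxx mul0r add0r.
congr (_ + _); apply: eq_bigr => j /negbTE ->; done.
Qed.

Definition wv {R : realType} {n : nat} (i : 'I_n) (w : 'I_n -> R) :=
  fun j => if j == i then 0 else w j.

Lemma optval_wv (R : realType) (n : nat) (p w : 'I_n -> R) (t : R) (i : 'I_n) :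
  optval p w t i = optval p (wv i w) t i.
Proof.
rewrite /optval; apply: eq_bigl => x.
case hx: (x i) => //=.
by rewrite (dot_split i w) hx mulr0 add0r.
Qed.

Lemma Lambda_split (R : realType) (n : nat) (p w : 'I_n -> R) (t : R) (i : 'I_n) :
  Lambda p w t i =
  ((w i)%:E + \big[Order.min/+oo%E]_(x : bvec n | x i && (optval p (wv i w) t i < dot p x)%R)
      (dot (wv i w) x)%:E - t%:E)%E.
Proof.
rewrite /Lambda -bigmin_addl -optval_wv; congr (_ - _)%E.
apply: eq_bigr => x /andP[hx _].
by rewrite (dot_split i w) hx mulr1.
Qed.

Theorem lemma2p7 (R : realType) (d : measure_display) (T : measurableType d)
  (P : probability T R) (n : nat) (phi : R) (hphi : 1 <= phi)
  (p : 'I_n -> R) (hp : forall j, 0 <= p j)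
  (a : 'I_n -> R) (ha0 : forall j, 0 <= a j) (ha1 : forall j, a j + phi^-1 <= 1)
  (w : 'I_n -> {RV P >-> R})
  (hunif : forall j (B : set R), measurable B ->
     distribution P (w j) B = uniform_prob (interval_len_pos (a j) hphi) B)
  (hindep : mutually_independent w)
  (t : R) (ht : 0 <= t) (i : 'I_n) (eps : R) (heps : 0 <= eps) :
  (P [set om | (0 < Lambda p (fun j => w j om) t i)%E /\
               (Lambda p (fun j => w j om) t i <= eps%:E)%E]
   <= (phi * eps)%:E)%E.
Proof.
pose G := Gs w i.
pose T0 := g_sigma_algebraType G.
pose vf : T0 -> 'I_n -> R := fun om => wv i (fun j => w j om).
have hv : forall j, measurable_fun (setT : set T0) (fun om => vf om j).
  move=> j _ B mB; rewrite /vf /wv.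
  case: eqP => [_|/eqP ji].
    exact: (@measurable_cst _ _ T0 _ setT (0:R) measurableT B mB).
  apply: sub_sigma_algebra.
  exists (fun k => if k == j then B else setT); split.
    by move=> k; case: eqP.
  apply/seteqP; split => om.
    by move=> [_ hB] k _; case: eqP => [->|].
  move=> h; split => //; have := h j; rewrite eqxx; apply.
  by rewrite /mkset in_setC1.
pose MVv := MV vf p t i.
have mMV : measurable_fun (setT : set T0) MVv := m_MV vf hv p t i.
have sub_meas : <<s G >> `<=` measurable :=
  smallest_sub (@sigma_algebra_measurable _ T) (Gs_meas w i).
have transfer : forall (d' : measure_display) (U : measurableType d') (f : T -> U),
    measurable_fun (setT : set T0) f -> measurable_fun (setT : set T) f.
  move=> d' U f hf _ B mB; apply: sub_meas; exact: hf.
have hLam : forall om, Lambda p (fun j => w j om) t i = ((w i om)%:E + MVv om - t%:E)%E.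
  by move=> om; rewrite Lambda_split.
set E := [set om | _ /\ _].
pose f om := ((w i om)%:E + MVv om - t%:E)%E.
have mf : measurable_fun (setT : set T) f.
  apply: emeasurable_funB; last exact: measurable_cst.
  apply: emeasurable_funD; last exact: transfer.
  apply/measurable_EFinP; exact: measurable_funPT.
have mE : measurable E.
  have -> : E = (fun om => (0 < f om)%E && (f om <= eps%:E)%E) @^-1` [set true].
    apply/seteqP; split => om /=; rewrite /f -hLam.
      by move=> [-> ->].
    by move/andP.
  have hb : measurable_fun (setT : set T) (fun om => (0 < f om)%E && (f om <= eps%:E)%E).
    apply: measurable_and.
      apply: measurable_fun_lte => //; exact: measurable_cst.
    apply: measurable_fun_lee => //; exact: measurable_cst.
  by have := hb measurableT [set true] I; rewrite setTI.
have phi0 : 0 < phi := lt_le_trans ltr01 hphi.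
apply/lee_addgt0Pr => gam hgam.
pose K := (Num.trunc (phi * (1 + eps) / gam)).+1.
have K0 : 0 < K%:R :> R by rewrite ltr0n.
pose del := (1 + eps) / K%:R.
have del0 : 0 < del by apply: divr_gt0 => //; lra.
have Kdel : del * K%:R = 1 + eps by rewrite /del divfK // gt_eqF.
have hdel : phi * del <= gam.
  have x0 : 0 <= phi * (1 + eps) / gam.
    apply: divr_ge0; last exact: ltW.
    apply: mulr_ge0; [exact: ltW| lra].
  have /andP[_ hK] := trunc_itv x0.
  rewrite -/K ltr_pdivrMr // in hK.
  rewrite /del mulrA ler_pdivrMr //; lra.
suff main : (P E <= (phi * (eps + del))%:E)%E.
  apply: le_trans main _; rewrite -EFinD lee_fin mulrDr lerD2l; exact: hdel.
pose sf om := t - fine (MVv om).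
pose al (m : nat) := - eps + m%:R * del.
pose A (m : nat) := [set om : T | (MVv om < +oo)%E && (al m <= sf om) && (sf om < al m + del)].
pose J (m : nat) : set R := [set` `]al m, al m + del + eps]%O].
pose N0 := w i @^-1` (~` `[0, 1]).
have msf : measurable_fun (setT : set T0) sf.
  apply: measurable_funB; first exact: measurable_cst.
  apply: measurableT_comp => //; exact: fine_measurable.
have hA : forall m, <<s G >> (A m).
  move=> m.
  have hb : measurable_fun (setT : set T0)
      (fun om => (MVv om < +oo)%E && (al m <= sf om) && (sf om < al m + del)).
    apply: measurable_and; first apply: measurable_and.
    - apply: measurable_fun_lte => //; exact: measurable_cst.
    - apply: measurable_fun_ler => //; exact: measurable_cst.
    - apply: measurable_fun_ltr => //; exact: measurable_cst.
  by have := hb measurableT [set true] I; rewrite setTI.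
have mA m : measurable (A m) := sub_meas _ (hA m).
have mJ m : measurable (w i @^-1` J m) := measurable_funPTI (w i) (measurable_itv _).
have mN0 : measurable N0 := measurable_funPTI (w i) (measurableC (measurable_itv _)).
pose U := \big[setU/set0]_(m < K) (A m `&` w i @^-1` J m).
have mU : measurable U by apply: bigsetU_measurable => m _; exact: measurableI.
have incl : E `<=` N0 `|` U.
  move=> om [h1 h2]; rewrite hLam in h1 h2.
  case hM : (MVv om) => [r| |] in h1 h2.
  - rewrite -EFinD lte_fin in h1.
    rewrite -EFinD lee_fin in h2.
    have [hin|hout] := pselect (([set` `[0, 1]%O] : set R) (w i om)); last by left.
    move: hin; rewrite /= in_itv /= => /andP[w0 w1].
    right; rewrite /U -(bigcup_mkord K (fun m => A m `&` w i @^-1` J m)).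
    have sfE : sf om = t - r by rewrite /sf hM.
    have x0 : 0 <= (t - r + eps) / del by apply: divr_ge0; [lra|exact: ltW].
    have /andP[k1 k2] := trunc_itv x0.
    set k := Num.trunc _ in k1 k2.
    have kK : (k < K)%N.
      rewrite -(ltr_nat R); apply: le_lt_trans k1 _.
      by rewrite ltr_pdivrMr // mulrC Kdel; lra.
    exists k => //; split.
      rewrite /A /= sfE; apply/andP; split; first (apply/andP; split).
      + by rewrite hM ltry.
      + by rewrite ler_pdivlMr // in k1; rewrite /al; lra.
      + by rewrite ltr_pdivrMr // in k2; rewrite /al -natr1 in k2 *; lra.
    rewrite /J /= in_itv /=; apply/andP; split.
      by rewrite ler_pdivlMr // in k1; rewrite /al; lra.
    by rewrite ltr_pdivrMr // in k2; rewrite /al -natr1 in k2 *; lra.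
  - by move: h2; rewrite addey // addye // leye_eq.
  - by move: h1; rewrite addeNy addNye.
have PN0 : P N0 = 0%E.
  have h : P N0 = uniform_prob (interval_len_pos (a i) hphi) (~` `[0, 1]) :=
    hunif i _ (measurableC (measurable_itv _)).
  by rewrite h unif_null.
have hJ m : (P (w i @^-1` J m) <= (phi * (eps + del))%:E)%E.
  have h : P (w i @^-1` J m) = uniform_prob (interval_len_pos (a i) hphi) (J m) :=
    hunif i _ (measurable_itv _).
  rewrite h; apply: le_trans (@unif_le R (a i) phi hphi (al m) (al m + del + eps) _) _.
    rewrite /al; lra.
  rewrite lee_fin; apply: ler_pM; [exact: ltW| |done|]; lra.
have triv : trivIset setT (fun m : 'I_K => A m).
  have aux (m1 m2 : nat) om : A m1 om -> A m2 om -> (m1 <= m2)%N.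
    move=> /andP[/andP[_ a1] b1] /andP[/andP[_ a2] b2].
    have h : m1%:R * del < m2.+1%:R * del by rewrite /al in a1 b2 *; rewrite -natr1; lra.
    by rewrite ltr_pM2r // ltr_nat ltnS in h.
  move=> m1 m2 _ _ [om [h1 h2]]; apply: val_inj => /=.
  by apply/eqP; rewrite eqn_leq (aux _ _ _ h1 h2) (aux _ _ _ h2 h1).
apply: le_trans (le_measure _ _ _ incl) _; rewrite ?inE //; first exact: measurableU.
apply: le_trans (measureU2 _ mN0 mU) _.
rewrite [X in (X + _)%E]PN0 add0e.
apply: le_trans (@le_mu_bigsetU _ _ _ P (fun m => A m `&` w i @^-1` J m) K _) _.
  by move=> m _; exact: measurableI.
have key m : (P (A m `&` w i @^-1` J m) <= P (A m) * (phi * (eps + del))%:E)%E.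
  rewrite (indep_ext w hindep i _ (measurable_itv _) _ (hA _)).
  apply: lee_wpmul2l; [exact: measure_ge0|exact: hJ].
apply: le_trans (lee_sum _ (fun (m : 'I_K) _ => key m)) _.
rewrite -ge0_sume_distrl; last by move=> m _; exact: measure_ge0.
rewrite -(@measure_bigsetU_ord _ _ _ P K xpredT (fun m : 'I_K => A m)) //.
apply: le_trans (lee_wpmul2r _ (probability_le1 P _)) _.
- rewrite lee_fin; apply: mulr_ge0; [exact: ltW|lra].
- by apply: bigsetU_measurable => m _; exact: mA.
by rewrite mul1e.
Qed.
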